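(* For every integer $m\ge1$, $$\beta(m;t,q)=L_m(1-q-tq,\,-tq^2).$$
   Context: For an integer $m\ge1$ and $0\le d\le m-1$ let $\rho(m;t,d)=\frac{m}{m-d}\sum_{i=0}^{d}\binom{m-1-d+i}{i}\binom{m-1-i}{d-i}t^i$, and let $\rho(m;t,m)=1+t^m$. Define $\beta(m;t,q)=\sum_{d=0}^{m}\rho(m;t,d)(-q)^d$. The Lucas polynomials are $L_0(x,s)=2$ and, for $m\ge1$, $L_m(x,s)=\sum_{i=0}^{\lfloor m/2\rfloor}\binom{m-i}{i}\frac{m}{m-i}s^ix^{m-2i}$. *)

(* Defs.v *)
From mathcomp Require Import all_boot all_order all_algebra.
Set Implicit Arguments. Unset Strict Implicit. Unset Printing Implicit Defensive.
Import Order.TTheory GRing.Theory Num.Theory.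
Local Open Scope ring_scope.

Definition rho {R : numFieldType} (m : nat) (t : R) (d : nat) : R :=
  if d == m then 1 + t ^+ m
  else (m%:R / (m - d)%:R) *
       \sum_(0 <= i < d.+1)
          ('C(m.-1 - d + i, i))%:R * ('C(m.-1 - i, d - i))%:R * t ^+ i.

Definition beta {R : numFieldType} (m : nat) (t q : R) : R :=
  \sum_(0 <= d < m.+1) rho m t d * (- q) ^+ d.

Definition lucas {R : numFieldType} (m : nat) (x s : R) : R :=
  if m == 0%N then 2
  else \sum_(0 <= i < (m./2).+1)
          ('C(m - i, i))%:R * (m%:R / (m - i)%:R) * s ^+ i * x ^+ (m - i.*2).

(* Main.v *)
Require Import Defs.
From mathcomp Require Import all_boot all_order all_algebra.
From mathcomp Require Import zify ring lra.
Import GRing.Theory Num.Theory.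

Definition fb (e k : nat) := 'C(e + k, k).
Definition T (e i j : nat) := (fb e i * fb e j)%N.
Definition aS (n d i : nat) := if (i <= d) && (d <= n) then T (n - d) i (d - i) else 0%N.

Lemma fbS e k : fb e.+1 k.+1 = (fb e k.+1 + fb e.+1 k)%N.
Proof. by rewrite /fb addSn binS addnS addSn. Qed.
Lemma fb0 e : fb e 0 = 1%N. Proof. by rewrite /fb bin0. Qed.
Lemma fb0n k : fb 0 k = 1%N. Proof. by rewrite /fb add0n binn. Qed.

Lemma aST n d i e j : (d = (i + j)%N /\ n = (d + e)%N) -> aS n d i = T e i j.
Proof. move=> [-> ->]; rewrite /aS ifT; last by lia. congr T; lia. Qed.
Lemma aS0 n d i : ~~ ((i <= d) && (d <= n)) -> aS n d i = 0%N.
Proof. by move=> h; rewrite /aS ifN. Qed.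




Lemma aS_rec n d i : (aS n.+2 d i + (if (1 < d) && (0 < i) then aS n (d-2) (i-1) else 0)
  = aS n.+1 d i + (if 0 < d then aS n.+1 d.-1 i + (if 0 < i then aS n.+1 d.-1 i.-1 else 0) else 0))%N.
Proof.
have [H|H] := boolP ((i <= d) && (d <= n.+2)); last first.
  rewrite (@aS0 _ _ _ H) (@aS0 n.+1 d i); last by lia.
  by case: ifP => h1; case: ifP => h2 //; try case: ifP => h3; rewrite ?addn0 ?add0n; rewrite ?aS0 //; lia.
have [j Hd] : exists j, d = (i + j)%N by exists (d - i); lia.
have [e Hn] : exists e, n.+2 = (d + e)%N by exists (n.+2 - d); lia.
subst d.
case: i Hn H => [|i'] Hn H.
- rewrite add0n ltnn andbF addn0 /=.
  case: j Hn H => [|j'] Hn H.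
  + by rewrite /aS /= /T !fb0.
  case: e Hn => [|e'] Hn.
  + rewrite (@aST _ _ _ 0 (j'.+1)) ; last by lia.
    rewrite (@aS0 n.+1 j'.+1 0); last by lia.
    rewrite (@aST _ _ _ 0 j') ; last by lia.
    by rewrite /T !fb0n.
  rewrite (@aST _ _ _ e'.+1 (j'.+1)) ; last by lia.
  rewrite (@aST n.+1 j'.+1 0 e' j'.+1) ; last by lia.
  rewrite /= (@aST _ _ _ e'.+1 j') ; last by lia.
  by rewrite /T !fb0 !mul1n addn0 fbS.
- case: j Hn H => [|j'] Hn H.
  + rewrite addn0 /=.
    rewrite (@aST n.+2 i'.+1 i'.+1 e 0) ; last by lia.
    rewrite (@aS0 n.+1 i' i'.+1); last by lia.
    rewrite (@aST n.+1 i' i' e 0) ; last by lia.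
    case: ifP => h1.
      rewrite (@aS0 n); last by lia.
      case: e Hn => [|e'] Hn.
        rewrite (@aS0 n.+1); last by lia.
        by rewrite /T !fb0 !fb0n.
      rewrite (@aST n.+1 i'.+1 i'.+1 e' 0) ; last by lia.
      by rewrite /T !fb0 !muln1 fbS; lia.
    have -> : i' = 0%N by lia.
    case: e Hn => [|e'] Hn.
      rewrite (@aS0 n.+1); last by lia.
      by rewrite /T !fb0 !fb0n.
    rewrite (@aST n.+1 1 1 e' 0) ; last by lia.
    by rewrite /T fbS !fb0 !muln1; lia.
  rewrite (_ : (1 < i'.+1 + j'.+1) && (0 < i'.+1) = true); last by lia.
  rewrite (_ : 0 < i'.+1 + j'.+1 = true); last by lia.
  rewrite ltn0Sn /=.
  rewrite !addSn !addnS /= !subn1 /=.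
  case: e Hn => [|e'] Hn.
    rewrite (@aST n.+2 _ _ 0 j'.+1) ; last by lia.
    rewrite (@aST n _ _ 0 j') ; last by lia.
    rewrite (@aS0 n.+1); last by lia.
    rewrite (@aST n.+1 _ i'.+1 0 j') ; last by lia.
    rewrite (@aST n.+1 _ i' 0 j'.+1) ; last by lia.
    by rewrite /T !fb0n.
  rewrite (@aST n.+2 _ _ e'.+1 j'.+1) ; last by lia.
  rewrite (@aST n _ _ e'.+1 j') ; last by lia.
  rewrite (@aST n.+1 _ i'.+1 e' j'.+1) ; last by lia.
  rewrite (@aST n.+1 _ i'.+1 e'.+1 j') ; last by lia.
  rewrite (@aST n.+1 _ i' e'.+1 j'.+1) ; last by lia.
  rewrite /T !fbS; lia.
Qed.
Local Open Scope ring_scope.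

Lemma K1 a i : ((a.+1 + i) * fb a i = a.+1 * fb a.+1 i)%N.
Proof.
rewrite /fb; have := mul_bin_down (a.+1 + i) i.
rewrite addSn /= => ->; congr (_ * _)%N; first lia.
Qed.
Lemma K2 a i : (i.+1 * fb a i.+1 = a.+1 * fb a.+1 i)%N.
Proof.
rewrite /fb mul_bin_left; congr (_ * _)%N; first lia.
by rewrite addnS addSn.
Qed.

Section F.
Variable R : numFieldType.

Lemma fbR1 a i : (fb a.+1 i)%:R = (a.+1 + i)%:R * (fb a i)%:R / (a.+1)%:R :> R.
Proof.
have h : (a.+1)%:R != 0 :> R by rewrite pnatr_eq0.
by rewrite -natrM K1 natrM mulrAC divff // mul1r.
Qed.
Lemma fbR2 a i : (fb a.+1 i)%:R = (i.+1)%:R * (fb a i.+1)%:R / (a.+1)%:R :> R.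
Proof.
have h : (a.+1)%:R != 0 :> R by rewrite pnatr_eq0.
by rewrite -natrM K2 natrM mulrAC divff // mul1r.
Qed.

Lemma coefB_gen a i j :
  ((a + i.+1 + j.+1).+1)%:R / (a.+1)%:R * (fb a i.+1 * fb a j.+1)%:R =
  (fb a.+1 i.+1 * fb a.+1 j.+1)%:R - (fb a.+1 i * fb a.+1 j)%:R :> R.
Proof.
have h : (a.+1)%:R != 0 :> R by rewrite pnatr_eq0.
rewrite !natrM (fbR1 a i.+1) (fbR1 a j.+1) (fbR2 a i) (fbR2 a j).
rewrite -[i.+1]addn1 -[j.+1]addn1 -[a.+1]addn1 -[(a + (i + 1) + (j + 1)).+1]addn1 !natrD.
have h' : a%:R + 1 != 0 :> R by rewrite natr1 pnatr_eq0.
by field.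
Qed.
Lemma coefB_j0 a i :
  ((a + i + 0).+1)%:R / (a.+1)%:R * (fb a i * fb a 0)%:R =
  (fb a.+1 i * fb a.+1 0)%:R :> R.
Proof.
have h : (a.+1)%:R != 0 :> R by rewrite pnatr_eq0.
rewrite /fb !bin0 !muln1 -/(fb a i) -/(fb a.+1 i) fbR1 addn0 -addSn.
by rewrite mulrAC.
Qed.
Lemma coefB_i0 a j :
  ((a + 0 + j).+1)%:R / (a.+1)%:R * (fb a 0 * fb a j)%:R =
  (fb a.+1 0 * fb a.+1 j)%:R :> R.
Proof.
have h : (a.+1)%:R != 0 :> R by rewrite pnatr_eq0.
rewrite /fb !bin0 !mul1n -/(fb a j) -/(fb a.+1 j) fbR1 addn0 -addSn.
by rewrite mulrAC.
Qed.
End F.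
Section U.
Variable R : comPzRingType.
Variable x : R.

Lemma Ucoef n k :
  ('C(n.+2 - k.+1, k.+1))%:R * x ^+ (n.+2 - (k.+1).*2) =
  x * (('C(n.+1 - k.+1, k.+1))%:R * x ^+ (n.+1 - (k.+1).*2)) + ('C(n - k, k))%:R * x ^+ (n - k.*2).
Proof.
have [le|gt] := leqP k n; last first.
  rewrite !bin_small ?mul0r ?mulr0 ?addr0 //; lia.
have -> : (n.+2 - k.+1 = (n - k).+1)%N by lia.
have -> : (n.+1 - k.+1 = n - k)%N by lia.
have -> : (n.+2 - k.+1.*2 = n - k.*2)%N by lia.
rewrite binS natrD mulrDl; congr (_ + _).
have [lt|ge] := ltnP k.*2 n.
  have -> : (n - k.*2 = (n.+1 - k.+1.*2).+1)%N by lia.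
  by rewrite exprS mulrCA.
by rewrite bin_small ?mul0r ?mulr0 //; lia.
Qed.
End U.
Section S.
Variable R : numFieldType.
Variables t w : R.

Definition ev (p : {poly {poly R}}) : R := (map_poly (horner_eval t) p).[w].

Lemma evD p q : ev (p + q) = ev p + ev q.
Proof. by rewrite /ev rmorphD hornerD. Qed.
Lemma evB p q : ev (p - q) = ev p - ev q.
Proof. by rewrite /ev rmorphB hornerD hornerN. Qed.
Lemma evM p q : ev (p * q) = ev p * ev q.
Proof. by rewrite /ev rmorphM hornerM. Qed.
Lemma ev_poly n E : ev (\poly_(i < n) E i) = \sum_(i < n) (E i).[t] * w ^+ i.
Proof.
rewrite /ev poly_def rmorph_sum horner_sum; apply: eq_bigr => i _.
by rewrite -mul_polyC rmorphM /= map_polyC map_polyXn hornerM hornerC hornerXn.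
Qed.
Lemma evX : ev 'X = w.
Proof. by rewrite /ev map_polyX hornerX. Qed.
Lemma evC c : ev c%:P = c.[t].
Proof. by rewrite /ev map_polyC hornerC. Qed.
Lemma ev1 : ev 1 = 1.
Proof. by rewrite /ev rmorph1 hornerC. Qed.

Definition Sp n : {poly {poly R}} := \poly_(d < n.+1) \poly_(i < d.+1) (aS n d i)%:R.

Lemma coefSp n d i : (Sp n)`_d`_i = (aS n d i)%:R.
Proof.
rewrite /Sp coef_poly; case: ifP => h1; last by rewrite coef0 aS0 //; lia.
rewrite coef_poly; case: ifP => h2 //; by rewrite aS0 //; lia.
Qed.

Lemma solve_lin {A E B : R} : A + E = B -> A = B - E.
Proof. by move<-; rewrite addrK. Qed.

Lemma Sp_rec n : Sp n.+2 = (1 + 'X * ('X + 1)%:P) * Sp n.+1 - ('X^2 * 'X%:P) * Sp n.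
Proof.
apply/polyP => d; apply/polyP => i.
rewrite mulrDl mul1r -[('X * _) * Sp n.+1]mulrA -[('X^2 * _) * Sp n]mulrA (coefB _ _ d) (coefD _ _ d) (coefXM _ d) (coefCM _ _ d.-1) (coefXnM _ _ d) (coefCM _ _ (d - 2)).
have h := aS_rec n d i; move/(congr1 (fun k => k%:R : R)): h; rewrite !natrD.
case: d => [|d] /=.
  by rewrite coefB coefD !coef0 !addr0 subr0 !coefSp => h; exact: h.
rewrite coefB coefD mulrDl mul1r coefD coefXM !coefSp.
case: d => [|d] /=.
  case: i => [|i] /=; rewrite coef0 ?coefSp; move=> h; rewrite (solve_lin h); ring.
rewrite subn1 /= coefXM.
case: i => [|i] /=; rewrite ?coefSp ?subn1 /= => h; rewrite (solve_lin h); ring.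
Qed.

Definition Up (x : R) n : {poly R} := \poly_(k < n.+1) (('C(n - k, k))%:R * x ^+ (n - k.*2)).

Lemma Up_rec x n : Up x n.+2 = x%:P * Up x n.+1 + 'X * Up x n.
Proof.
apply/polyP => k; rewrite coefD coefCM coefXM !coef_poly.
case: k => [|k] /=.
  by rewrite (_ : (0.*2 = 0)%N) // !subn0 !bin0 addr0 !mul1r exprS.
have [lt|ge] := ltnP k n.+1.
  rewrite (_ : (k.+1 < n.+3)%N = true); last by lia.
  rewrite (_ : (k.+1 < n.+2)%N = true); last by lia.
  exact: Ucoef.

rewrite (ifN _ _ (_ : ~~ (k.+1 < n.+2)%N)); last by lia.
case: ifP => // _.
  by rewrite bin_small ?mul0r ?mulr0 ?addr0 //; lia.
by rewrite mulr0 addr0.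
Qed.

Let xx := 1 + w * (t + 1).
Let ss := - (w ^+ 2 * t).

Lemma ev_x : ev (1 + 'X * ('X + 1)%:P) = xx.
Proof. by rewrite /ev rmorphD rmorph1 rmorphM /= map_polyX map_polyC /= !hornerE horner_evalE !hornerE. Qed.
Lemma ev_s : ev ('X^2 * 'X%:P) = w ^+ 2 * t.
Proof. by rewrite /ev rmorphM /= rmorphXn /= map_polyX map_polyC /= !hornerE horner_evalE hornerX. Qed.

Lemma evSp0 : ev (Sp 0) = 1.
Proof.
rewrite /Sp ev_poly big_ord1 horner_poly big_ord1 /= expr0 !mulr1.
by rewrite /aS /T /= fb0.
Qed.

Lemma evSp1 : ev (Sp 1) = xx.
Proof.
rewrite /Sp ev_poly big_ord_recr big_ord1 /= !horner_poly big_ord1 big_ord_recr big_ord1 /=.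
rewrite /aS /T /= !fb0 !fb0n /xx; ring.
Qed.

Lemma Up0 : (Up xx 0).[ss] = 1.
Proof. by rewrite /Up horner_poly big_ord1 /= bin0 !expr0 !mulr1. Qed.

Lemma Up1 : (Up xx 1).[ss] = xx.
Proof.
rewrite /Up horner_poly big_ord_recr big_ord1 /= bin0 bin_small // expr0 mulr1; ring.
Qed.

Lemma evSp_Up n : ev (Sp n) = (Up xx n).[ss].
Proof.
suff : ev (Sp n) = (Up xx n).[ss] /\ ev (Sp n.+1) = (Up xx n.+1).[ss] by case.
elim: n => [|n [IH1 IH2]]; first by rewrite evSp0 evSp1 Up0 Up1.
split => //.
rewrite Sp_rec Up_rec evB (evM _ (Sp n.+1)) (evM _ (Sp n)) ev_x ev_s hornerD hornerM hornerC hornerM hornerX IH1 IH2.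
rewrite /xx /ss; ring.
Qed.

Definition Bp m : {poly {poly R}} := \poly_(d < m.+1)
  (if d == m then 1 + 'X^m else
   \poly_(i < d.+1) ((m%:R / (m - d)%:R) * ('C(m.-1 - d + i, i) * 'C(m.-1 - i, d - i))%:R)).

Lemma ev_Bp m : ev (Bp m) = \sum_(0 <= d < m.+1) rho m t d * w ^+ d.
Proof.
rewrite ev_poly big_mkord; apply: eq_bigr => d _; congr (_ * _).
rewrite /rho; case: ifP => [/eqP E|ne]; first by rewrite !hornerE.
rewrite horner_poly big_mkord mulr_sumr; apply: eq_bigr => i _.
by rewrite natrM !mulrA.
Qed.

Lemma aS_diag n i : aS n n i = (i <= n)%N.
Proof. rewrite /aS leqnn andbT subnn /T !fb0n; by case: (i <= n)%N. Qed.

Lemma Bp_eq k : Bp k.+2 = Sp k.+2 - ('X^2 * 'X%:P) * Sp k.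
Proof.
apply/polyP => d; apply/polyP => i.
rewrite coef_poly (coefB _ _ d) -mulrA (coefXnM _ _ d) (coefCM _ _ (d - 2)) coefB coefSp.
have [lt|gt|eq] := ltngtP d k.+2.
- rewrite ltnS (ltnW lt) coef_poly.
  rewrite ltnS; have [gti|lei] := ltnP d i.
    rewrite aS0; last by lia.
    case: ifP => h2; first by rewrite coef0 subr0.
    rewrite coefXM; case: eqP => h3; first by rewrite subr0.
    by rewrite coefSp aS0 ?subr0 //; lia.
  move Ha: (k.+1 - d)%N => a; move Hj: (d - i)%N => j.
  rewrite (@aST k.+2 d i a.+1 j); last by lia.
  have -> : (k.+2 - d = a.+1)%N by lia.
  have -> : 'C(a + i, i) = fb a i by [].
  have -> : 'C(k.+2.-1 - i, j) = fb a j by rewrite /fb; congr 'C(_, _); lia.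
  have -> : k.+2 = (a + i + j).+1 by lia.
  rewrite /T; case: i lei Hj => [|i'] lei Hj.
    case: ifP => _; first by rewrite coef0 subr0 coefB_i0.
    by rewrite coefXM /= subr0 coefB_i0.
  rewrite /T.
  case: j Hj => [|j'] Hj.
    case: ifP => h2; first by rewrite coef0 subr0 coefB_j0.
    rewrite coefXM /= coefSp aS0 ?subr0 ?coefB_j0 //; lia.
  have -> : (d < 2)%N = false by lia.
  rewrite coefXM /= coefSp (@aST k (d - 2) i' a.+1 j'); last by lia.
  exact: coefB_gen.
- rewrite ifN; last by lia.
  rewrite coef0 aS0; last by lia.
  rewrite ifN; last by lia.
  rewrite coefXM; case: eqP => _; first by rewrite subr0.
  by rewrite coefSp aS0 ?subr0 //; lia.
- subst d; rewrite ltnSn coefD coef1 coefXn aS_diag /= subn2 /= coefXM.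
  case: i => [|i] /=; first by rewrite subr0 addr0.
  rewrite coefSp aS_diag.
  have [h|h|->] := ltngtP i k.+1.
  + rewrite (_ : (i < k.+2)%N = true); last by lia.
    rewrite (_ : (i <= k)%N = true); last by lia.
    rewrite (_ : (i.+1 == k.+2) = false); last by lia.
    by rewrite add0r subrr.
  + rewrite (_ : (i.+1 == k.+2) = false); last by lia.
    rewrite (_ : (i < k.+2)%N = false); last by lia.
    rewrite (_ : (i <= k)%N = false); last by lia.
    by rewrite add0r subrr.
  + by rewrite eqxx ltnSn ltnn subr0 add0r.
Qed.
End S.
Arguments Up {R}.
Arguments ev {R}.
Arguments Sp {R}.
Arguments Bp {R}.

Section L.
Variable R : numFieldType.
Variable x : R.

Definition Lp m : {poly R} :=
  \poly_(j < m.+1) (('C(m - j, j))%:R * (m%:R / (m - j)%:R) * x ^+ (m - j.*2)).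

Lemma Lp_eq k : Lp k.+2 = Up x k.+2 + 'X * Up x k.
Proof.
apply/polyP => j; rewrite coefD coefXM !coef_poly.
case: j => [|j] /=.
  rewrite !subn0 divff ?pnatr_eq0 // mulr1 addr0.
  by [].
have [le|gt] := leqP j k; last first.
  rewrite (_ : (j < k.+1)%N = false) ?addr0; last by lia.
  case: ifP => // _; rewrite bin_small ?mul0r //; lia.
rewrite (_ : (j < k.+1)%N = true); last by lia.
rewrite (_ : (j.+1 < k.+3)%N = true); last by lia.
have [big|small] := ltnP k j.*2.
  rewrite !bin_small ?mul0r ?add0r //; lia.
have -> : (k.+2 - j.+1.*2 = k - j.*2)%N by lia.
move Hr: (k.+2 - j.+1)%N => r.
have -> : (k - j = r.-1)%N by lia.
have hr : (r%:R : R) != 0 by rewrite pnatr_eq0; lia.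
have E : ('C(r.-1, j))%:R = (j.+1)%:R * ('C(r, j.+1))%:R / r%:R :> R.
  apply: (mulIf hr); rewrite divfK // -!natrM mulnC mul_bin_diag //.
have -> : k.+2 = (r + j.+1)%N by lia.
rewrite E natrD -addn1 natrD; field; exact: hr.
Qed.
End L.
Arguments Lp {R}.

Lemma lucas_Lp (R : numFieldType) m (x s : R) : (0 < m)%N -> lucas m x s = (Lp x m).[s].
Proof.
move=> m0; rewrite /lucas (_ : (m == 0%N) = false); last by lia.
rewrite /Lp horner_poly big_mkord (big_ord_widen m.+1 (fun i => 'C(m - i, i)%:R * (m%:R / (m - i)%:R) * s ^+ i * x ^+ (m - i.*2))); last by lia.
rewrite big_mkcond; apply: eq_bigr => i _; case: ifP => h; first by rewrite mulrAC.
by rewrite bin_small ?mul0r //; lia.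
Qed.

Theorem lemma2p2 (R : numFieldType) (m : nat) (t q : R) :
  (1 <= m)%N -> beta m t q = lucas m (1 - q - t * q) (- t * q ^+ 2).
Proof.
case: m => [//|[|k]] _.
  rewrite /beta /lucas /= big_nat_recr //= big_nat1 /rho /= big_nat1.
  rewrite big_nat1 /= !subn0 !bin0 /= !expr0 !expr1 !divr1; ring.
have hb : beta k.+2 t q = ev t (- q) (Bp k.+2) by rewrite ev_Bp.
rewrite hb Bp_eq evB evM ev_s !evSp_Up lucas_Lp // Lp_eq.
have EX : 1 + (- q) * (t + 1) = 1 - q - t * q by ring.
have ES : - ((- q) ^+ 2 * t) = - t * q ^+ 2 by ring.
rewrite EX ES hornerD hornerM hornerX; ring.
Qed.
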